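(* Let $X$ be a finite set, let $\Sigma$ be a set of implications on $X$ with closure system $\mathcal{F}_\Sigma$, and let $A\subseteq X$ be a set with $A\notin\mathcal{F}_\Sigma$. Let $\mathcal{F}_\Sigma(A)=\mathcal{F}_\Sigma\cup\{F\cap A: F\in\mathcal{F}_\Sigma\}$ and let $\Sigma(A)$ be the body-building formula. Then: (1) every member of $\mathcal{F}_\Sigma(A)$ satisfies every implication of $\Sigma(A)$; (2) every set $P\subseteq X$ with $P\not\subseteq A$ that satisfies every implication of $\Sigma(A)$ belongs to $\mathcal{F}_\Sigma(A)$; (3) if $\Sigma$ is a direct basis (of $\mathcal{F}_\Sigma$), then $\Sigma(A)$ is a basis of the closure system $\mathcal{F}_\Sigma(A)$, i.e. $\mathcal{F}_{\Sigma(A)}=\mathcal{F}_\Sigma(A)$, and moreover $\Sigma(A)$ is a direct basis of $\mathcal{F}_\Sigma(A)$.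
   Context: An implication on a finite set $X$ is a pair written $C\rightarrow d$ with $C\subseteq X$, $d\in X$. A set $Y\subseteq X$ satisfies $C\rightarrow d$ (the implication holds on $Y$) if $C\not\subseteq Y$ or $d\in Y$; otherwise the implication fails on $Y$. For a set $\Sigma$ of implications, $\mathcal{F}_\Sigma$ is the family of all $Y\subseteq X$ satisfying every implication of $\Sigma$; it is a closure system (closed under intersections, containing $X$), and $\Sigma$ is called a basis of a closure system $\mathcal{F}$ if $\mathcal{F}_\Sigma=\mathcal{F}$. The associated closure operator is $\varphi(Y)=$ the smallest member of $\mathcal{F}_\Sigma$ containing $Y$. $\Sigma$ is direct if for every $Y\subseteq X$, $\varphi(Y)=Y\cup\{d:(C\rightarrow d)\in\Sigma,\ C\subseteq Y\}$. Body-building formula: $\Sigma_t(A)$ is the set of implications of $\Sigma$ that hold on $A$, and $\Sigma_f(A)$ the set of those that fail on $A$ (i.e. $C\subseteq A$, $d\notin A$). For $\sigma=(C\rightarrow d)\in\Sigma_f(A)$ let $\sigma(A)=\{C\cup\{x\}\rightarrow d: x\in X\setminus(A\cup\{d\})\}$ (empty if $X\setminus(A\cup\{d\})=\emptyset$). Then $\Sigma(A)=\Sigma_t(A)\cup\bigcup_{\sigma\in\Sigma_f(A)}\sigma(A)$. *)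

(* Defs.v *)
(* The finite ground set X is the finType T (X = [set: T]).
   An implication C -> d is a pair (C, d) : {set T} * T. *)
From mathcomp Require Import all_boot.
Set Implicit Arguments. Unset Strict Implicit. Unset Printing Implicit Defensive.

Definition impl (T : finType) := ({set T} * T)%type.

Definition holds (T : finType) (Y : {set T}) (s : impl T) : bool :=
  ~~ (s.1 \subset Y) || (s.2 \in Y).

Definition fails (T : finType) (Y : {set T}) (s : impl T) : bool :=
  (s.1 \subset Y) && (s.2 \notin Y).

Definition FSigma (T : finType) (S : {set impl T}) : {set {set T}} :=
  [set Y : {set T} | [forall s in S, holds Y s]].

Definition clos (T : finType) (Fam : {set {set T}}) (Y : {set T}) : {set T} :=
  \bigcap_(F in Fam | Y \subset F) F.

Definition direct_for (T : finType) (Fam : {set {set T}}) (S : {set impl T}) : Prop :=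
  forall Y : {set T}, clos Fam Y = Y :|: [set s.2 | s in S & s.1 \subset Y].

Definition direct (T : finType) (S : {set impl T}) : Prop :=
  direct_for (FSigma S) S.

Definition Sigma_t (T : finType) (S : {set impl T}) (A : {set T}) : {set impl T} :=
  [set s in S | holds A s].

Definition Sigma_f (T : finType) (S : {set impl T}) (A : {set T}) : {set impl T} :=
  [set s in S | fails A s].

Definition sigmaA (T : finType) (A : {set T}) (s : impl T) : {set impl T} :=
  [set (s.1 :|: [set x], s.2) | x in ~: (A :|: [set s.2])].

Definition SigmaA (T : finType) (S : {set impl T}) (A : {set T}) : {set impl T} :=
  Sigma_t S A :|: \bigcup_(s in Sigma_f S A) sigmaA A s.

Definition FSigmaA (T : finType) (S : {set impl T}) (A : {set T}) : {set {set T}} :=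
  FSigma S :|: [set F :&: A | F in FSigma S].

(* Main.v *)
Require Import Defs.
From mathcomp Require Import all_boot.

Set Implicit Arguments. Unset Strict Implicit. Unset Printing Implicit Defensive.

Section Aux.
Variable T : finType.
Implicit Types (S : {set impl T}) (A Y P F : {set T}) (s : impl T).

Lemma holdsP Y s : holds Y s <-> (s.1 \subset Y -> s.2 \in Y).
Proof. by rewrite /holds -implybE; split => /implyP. Qed.

Lemma failsE A s : fails A s = ~~ holds A s.
Proof. by rewrite /fails /holds negb_or negbK. Qed.

Lemma FSigmaP S Y : reflect (forall s, s \in S -> holds Y s) (Y \in FSigma S).
Proof. by rewrite inE; apply: (iffP forall_inP). Qed.

Lemma FSigmaAE S A Y : Y \in FSigmaA S A ->
  Y \in FSigma S \/ exists2 F, F \in FSigma S & Y = F :&: A.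
Proof.
rewrite in_setU => /orP [H|/imsetP [F HF ->]]; [by left | by right; exists F].
Qed.

Lemma SigmaA_elim S A s : s \in SigmaA S A ->
  (s \in S /\ holds A s) \/
  exists2 s0, s0 \in S /\ fails A s0 &
    exists2 x, x \notin A /\ x != s0.2 & s = (s0.1 :|: [set x], s0.2).
Proof.
rewrite in_setU => /orP [|/bigcupP [s0 Hs0 /imsetP [x Hx ->]]].
- by rewrite inE => /andP [? ?]; left.
- right; move: Hs0; rewrite inE => /andP [H1 H2]; exists s0 => //.
  exists x => //; move: Hx; rewrite !inE negb_or => /andP [-> ->]; done.
Qed.

Lemma SigmaA_t S A s : s \in S -> holds A s -> s \in SigmaA S A.
Proof. by move=> H1 H2; rewrite in_setU; apply/orP; left; rewrite inE H1 H2. Qed.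

Lemma SigmaA_f S A s0 x : s0 \in S -> fails A s0 -> x \notin A -> x != s0.2 ->
  (s0.1 :|: [set x], s0.2) \in SigmaA S A.
Proof.
move=> H1 H2 H3 H4; rewrite in_setU; apply/orP; right; apply/bigcupP; exists s0.
  by rewrite inE H1 H2.
by apply/imsetP; exists x => //; rewrite !inE negb_or H3 H4.
Qed.

Lemma clos_in S Y : clos (FSigma S) Y \in FSigma S.
Proof.
apply/FSigmaP => s Hs; apply/holdsP => HC; apply/bigcapP => F /andP [HF HYF].
apply: (proj1 (holdsP _ _) (FSigmaP _ _ HF s Hs)).
by apply: subset_trans HC _; apply: bigcap_inf; rewrite HF HYF.
Qed.

Lemma part1 S A Y : Y \in FSigmaA S A -> forall s, s \in SigmaA S A -> holds Y s.
Proof.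
move=> HY s Hs; apply/holdsP => HC.
case: (SigmaA_elim Hs) => [[HsS HsA] | [s0 [Hs0 Hf] [x [HxA Hxd] Es]]].
- case: (FSigmaAE HY) => [HYF | [F HF EY]].
  + by move/FSigmaP: HYF => /(_ s HsS)/holdsP; apply.
  + move: HC; rewrite EY subsetI => /andP [HCF HCA]; rewrite inE; apply/andP; split.
      by move/FSigmaP: HF => /(_ s HsS)/holdsP; apply.
    by move/holdsP: HsA; apply.
- rewrite Es /= in HC *; case: (FSigmaAE HY) => [HYF | [F HF EY]].
  + move/FSigmaP: HYF => /(_ s0 Hs0)/holdsP; apply.
    by apply: subset_trans HC; apply: subsetUl.
  + have : x \in Y by apply: (subsetP HC); rewrite !inE eqxx orbT.
    by rewrite EY inE (negbTE HxA) andbF.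
Qed.

Lemma part2 S A P : ~~ (P \subset A) ->
  (forall s, s \in SigmaA S A -> holds P s) -> P \in FSigmaA S A.
Proof.
move=> HPA HP; rewrite in_setU; apply/orP; left; apply/FSigmaP => s Hs.
apply/holdsP => HC; case HA: (holds A s).
  by apply: (proj1 (holdsP _ _) (HP s (SigmaA_t Hs HA))).
have Hf : fails A s by rewrite failsE HA.
case/subsetPn: HPA => x HxP HxA.
case: (eqVneq x s.2) => [<- // | Hxd].
apply: (proj1 (holdsP _ _) (HP _ (SigmaA_f Hs Hf HxA Hxd))) => /=.
by rewrite subUset HC sub1set HxP.
Qed.

End Aux.

Theorem mainTheorem1 (T : finType) (S : {set impl T}) (A : {set T}) :
  A \notin FSigma S ->
  [/\ (forall Y, Y \in FSigmaA S A -> forall s, s \in SigmaA S A -> holds Y s),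
      (forall P : {set T}, ~~ (P \subset A) ->
         (forall s, s \in SigmaA S A -> holds P s) -> P \in FSigmaA S A)
    & (direct S ->
         FSigma (SigmaA S A) = FSigmaA S A /\
         direct_for (FSigmaA S A) (SigmaA S A))].
Proof.
move=> _; split; [exact: part1 | exact: part2 |].
move=> Hdir.
have phi_in : forall Y, Y :|: [set s.2 | s in S & s.1 \subset Y] \in FSigma S.
  by move=> Y; rewrite -Hdir; exact: clos_in.
have eqF : FSigma (SigmaA S A) = FSigmaA S A.
  apply/setP => P; apply/idP/idP.
  - move/FSigmaP => HP; case HPA: (P \subset A); last by apply: part2 HP; rewrite HPA.
    rewrite in_setU; apply/orP; right; apply/imsetP.
    exists (P :|: [set s.2 | s in S & s.1 \subset P]) => //.
    apply/eqP; rewrite eqEsubset subsetI subsetUl HPA /=.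
    apply/subsetP => y; rewrite inE => /andP [].
    rewrite in_setU => /orP [// | /imsetP [s]].
    rewrite inE => /andP [Hs HsP] -> HyA.
    have HA : holds A s by apply/holdsP.
    exact: (proj1 (holdsP _ _) (HP s (SigmaA_t Hs HA))).
  - by move=> HY; apply/FSigmaP => s Hs; exact: part1 HY s Hs.
split=> // Y; apply/eqP; rewrite eqEsubset; apply/andP; split.
- set psi := Y :|: _.
  case HYA: (Y \subset A).
  + have HG : (Y :|: [set s.2 | s in S & s.1 \subset Y]) :&: A \in FSigmaA S A.
      by rewrite in_setU; apply/orP; right; apply/imsetP; exists (Y :|: [set s.2 | s in S & s.1 \subset Y]); [exact: phi_in|].
    apply: subset_trans (bigcap_inf _ _) _; first by apply/andP; split; [exact: HG | rewrite subsetI subsetUl HYA].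
    apply/subsetP => y; rewrite inE => /andP [].
    rewrite in_setU => /orP [Hy _| /imsetP [s]]; first by rewrite in_setU Hy.
    rewrite inE => /andP [Hs HsY] -> HyA.
    have HA : holds A s by apply/holdsP.
    rewrite in_setU; apply/orP; right; apply/imsetP; exists s => //.
    by rewrite inE SigmaA_t.
  + have HG : (Y :|: [set s.2 | s in S & s.1 \subset Y]) \in FSigmaA S A.
      by rewrite in_setU phi_in.
    apply: subset_trans (bigcap_inf _ _) _; first by apply/andP; split; [exact: HG | rewrite subsetUl].
    apply/subsetP => y; rewrite in_setU => /orP [Hy| /imsetP [s]].
      by rewrite in_setU Hy.
    rewrite inE => /andP [Hs HsY] ->.
    case HA: (holds A s).
      rewrite in_setU; apply/orP; right; apply/imsetP; exists s => //.
      by rewrite inE SigmaA_t.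
    have Hf : fails A s by rewrite failsE HA.
    move/negbT: HYA; case/subsetPn => x HxY HxA.
    case: (eqVneq x s.2) => [<- | Hxd]; first by rewrite in_setU HxY.
    rewrite in_setU; apply/orP; right; apply/imsetP.
    exists (s.1 :|: [set x], s.2) => //.
    by rewrite inE SigmaA_f //= subUset HsY sub1set HxY.
- apply/subsetP => y Hy; apply/bigcapP => F /andP [HF HYF].
  move: Hy; rewrite in_setU => /orP [/(subsetP HYF) // | /imsetP [s]].
  rewrite inE => /andP [Hs HsY] ->.
  apply: (proj1 (holdsP _ _) (part1 HF Hs)); exact: subset_trans HsY HYF.
Qed.
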